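(* For an edge $t \overset{k}{—} t'$ in $\mathbb{T}_n$ and $\varepsilon\in \{\pm 1\}$, we have \[ \mu_{k;t}=\psi_{k;t}(\mathbf{\hat{Y}}_{k;t}^{\varepsilon})^{\varepsilon}\circ\phi_{k;t;\varepsilon}, \] where $\phi_{k;t;\varepsilon}$ is the unique $\mathbb{Z}[q^{\pm\frac{1}{2}}]$-algebra isomorphism from $\mathcal{F}_{t'}$ to $\mathcal{F}_{t}$ taking $\mathbf{X}_{t'}(\alpha)$ to $\mathbf{X}_{t}(E_{k,\varepsilon}^{\tilde{B}_{t}R}\alpha)$ for any $\alpha\in\mathbb{Z}^{m}$.
   Context: Setting: generalized quantum cluster algebras. Fix integers $m\ge n\ge 1$ and mutation data $(R,\mathbf{h})$: $R=\operatorname{diag}\{r_1,\dots,r_n\}$ with positive integers $r_k$, and for each $k\in[1,n]$ elements $h_{k,0}(q^{\frac12}),\dots,h_{k,r_k}(q^{\frac12})\in\mathbb{Z}[q^{\pm\frac12}]$ with $h_{k,s}=h_{k,r_k-s}$ and $h_{k,0}=h_{k,r_k}=1$. A compatible pair $(\tilde B,\Lambda)$ consists of an integer $m\times n$ matrix $\tilde B=(b_{ij})$ and a skew-symmetric integer $m\times m$ matrix $\Lambda=(\lambda_{ij})$ with $\tilde B^T\Lambda=[D\ 0]$, where $D=\operatorname{diag}\{d_1^{-1},\dots,d_n^{-1}\}$ has positive integer diagonal entries. $E_{k,\varepsilon}^{\tilde BR}$ is the $m\times m$ matrix equal to the identity except in its $k$-th column, whose entries are $-1$ in row $k$ and $[-\varepsilon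 b_{ik}r_k]_+$ in row $i\neq k$ (here $[b]_+=\max(b,0)$, applied entrywise to vectors). An $(R,\mathbf h)$-quantum seed pattern $t\mapsto\Sigma_t=(\mathbf X_t,\tilde B_t,\Lambda_t)$ over the $n$-regular tree $\mathbb{T}_n$ is fixed; for $\alpha=(a_1,\dots,a_m)^T\in\mathbb{Z}^m$, $\mathbf X_t(\alpha)=q^{\frac12\sum_{i<j}a_ia_j\lambda_{ji;t}}X_{1;t}^{a_1}\cdots X_{m;t}^{a_m}$, so $\mathbf X_t(\alpha)\mathbf X_t(\beta)=q^{\frac12\alpha^T\Lambda_t\beta}\mathbf X_t(\alpha+\beta)$. $\mathcal{T}_t$ is the quantum torus ($\mathbb{Z}[q^{\pm\frac12}]$-algebra spanned by the $\mathbf X_t(\alpha)$) and $\mathcal F_t$ its skew field of fractions. For $\alpha\in\mathbb{Z}^n$, $\hat{\mathbf Y}_t^\alpha:=\mathbf X_t(\tilde B_t\alpha)$ and $\hat{\mathbf Y}_{k;t}:=\hat{\mathbf Y}_t^{f_k}$ ($f_1,\dots,f_n$ standard basis of $\mathbb{Z}^n$; $e_1,\dots,e_m$ standard basis of $\mathbb{Z}^m$). For an edge $t\overset{k}{—}t'$, $\mu_{k;t}:\mathcal F_{t'}\to\mathcal F_t$ is the $\mathbb{Z}[q^{\pm\frac12}]$-algebra isomorphism with $\mu_{k;t}(\mathbf X_{t'}(e_i))=\mathbf X_t(e_i)$ for $i\ne k$ and $\mu_{k;t}(\mathbf X_{t'}(e_k))=\sum_{s=0}^{r_k}h_{k,s}(q^{\frac12})\mathbf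 X_t(s[\varepsilon\mathbf b_k]_++(r_k-s)[-\varepsilon\mathbf b_k]_+-e_k)$, $\mathbf b_k$ the $k$-th column of $\tilde B_t$ (independent of $\varepsilon$). For $a\in\mathbb{Z}$: $(\sum_{s=0}^{r_k}h_{k,s}(q^{\frac12})(q^{\frac b2}z)^s)^{\{a\}}$ is $\prod_{i=1}^a\sum_s h_{k,s}(q^{\frac12})(q^{\frac{b(2i-1)}2}z)^s$ if $a>0$, $1$ if $a=0$, and $\prod_{i=a}^{-1}(\sum_s h_{k,s}(q^{\frac12})(q^{\frac{b(2i+1)}2}z)^s)^{-1}$ if $a<0$; the exponent $-\{a\}$ denotes the inverse of this. With $(\mathbf u,\mathbf v)_D=\mathbf u^TD\mathbf v$ and $\bar\beta\in\mathbb{Z}^n$ the truncation of $\beta\in\mathbb{Z}^m$ to its first $n$ coordinates, $\psi_{k;t}(\hat{\mathbf Y}_t^\alpha):\mathcal F_t\to\mathcal F_t$ is the $\mathbb{Z}[q^{\pm\frac12}]$-algebra automorphism $\mathbf X_t(\beta)\mapsto\mathbf X_t(\beta)(\sum_{s=0}^{r_k}h_{k,s}(q^{\frac12})(q^{\frac1{2d_k}}\hat{\mathbf Y}_t^\alpha)^s)^{-\{d_k(\bar\beta,\alpha)_D\}}$; $\psi^{\varepsilon}$ means $\psi$ for $\varepsilon=1$ and its inverse for $\varepsilon=-1$. *)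

(* Defs.v *)
From HB Require Import structures.
From mathcomp Require Import all_boot all_order all_algebra.
Set Implicit Arguments. Unset Strict Implicit. Unset Printing Implicit Defensive.
Import Order.TTheory GRing.Theory Num.Theory.
Local Open Scope ring_scope.

(* Convention: m = n + p (so m >= n); vectors in Z^m are column vectors
   'cV[int]_(n+p); the truncation bar(beta) is usubmx beta.
   v stands for q^{1/2}. *)

(* (c, e) represents  sum_i c_i v^(e+i). *)
Definition laurent := (seq int * int)%type.

Definition lcoef (h : laurent) (j : int) : int :=
  if h.2 <= j then nth 0 h.1 `|j - h.2|%N else 0.

Definition leqv (h1 h2 : laurent) : Prop := forall j, lcoef h1 j = lcoef h2 j.

Definition lone : laurent := ([:: 1], 0).

Definition leval (F : unitRingType) (v : F) (h : laurent) : F :=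
  \sum_(i < size h.1) (h.1`_i)%:~R * v ^ (h.2 + i%:Z).

Definition posp (x : int) : int := Num.max x 0.
Definition posv (m : nat) (a : 'cV[int]_m) : 'cV[int]_m := map_mx posp a.

(* ---------- the skew field of fractions F_t of the quantum torus T_t ----------
   F is a division ring which is a Z[v^{+-1}]-algebra (v central unit),
   X alpha = X_t(alpha) satisfies X(a)X(b) = q^{a^T Lam b /2} X(a+b),
   the elements v^j X(alpha) are Z-linearly independent (so their span is the
   quantum torus T_t, a free Z[q^{+-1/2}]-module on the X(alpha)), and F is
   generated as a division ring by v and T_t (hence F is the skew field of
   fractions of the Ore domain T_t). *)
Definition skew_field_of_fractions (m : nat) (F : unitRingType) (v : F)
    (Lam : 'M[int]_m) (X : 'cV[int]_m -> F) : Prop :=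
  [/\ (forall x : F, x != 0 -> x \is a GRing.unit),
      v \is a GRing.unit /\ (forall x : F, v * x = x * v),
      (forall a b : 'cV[int]_m, X a * X b = v ^ ((a^T *m Lam *m b) 0 0) * X (a + b)),
      (forall (N : nat) (j : 'I_N -> int) (a : 'I_N -> 'cV[int]_m) (z : 'I_N -> int),
          injective (fun i => (j i, a i)) ->
          \sum_(i < N) (z i)%:~R * v ^ (j i) * X (a i) = 0 ->
          forall i, z i = 0) &
      (forall S : F -> Prop,
          S 1 -> (forall x y, S x -> S y -> S (x - y)) ->
          (forall x y, S x -> S y -> S (x * y)) ->
          (forall x, S x -> S x^-1) -> S v -> (forall a, S (X a)) ->
          forall x, S x)].

Definition Emx (n p : nat) (B : 'M[int]_(n + p, n)) (r : 'I_n -> nat)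
    (k : 'I_n) (eps : int) : 'M[int]_(n + p) :=
  \matrix_(i, j) if j == lshift p k then
                   (if i == lshift p k then -1 else posp (- eps * B i k * (r k)%:Z))
                 else (i == j)%:R.

Definition evec (m : nat) (i : 'I_m) : 'cV[int]_m := delta_mx i 0.

Definition hfac (F : unitRingType) (v : F) (h : nat -> F) (r : nat) (c : int) (z : F) : F :=
  \sum_(s < r.+1) h s * (v ^ c * z) ^+ s.

(* (sum_s h_s (q^{b/2} z)^s)^{a} *)
Definition hpow (F : unitRingType) (v : F) (h : nat -> F) (r : nat) (b : int) (z : F)
    (a : int) : F :=
  if 0 <= a then \prod_(j < `|a|%N) hfac v h r (b * (2 * j%:Z + 1)) z
  else \prod_(j < `|a|%N) (hfac v h r (b * (2 * (a + j%:Z) + 1)) z)^-1.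

(* d_k (bar beta, alpha)_D, with D = diag(delta), delta_k = d_k^{-1} *)
Definition psi_exp (n p : nat) (delta : 'I_n -> int) (k : 'I_n)
    (beta : 'cV[int]_(n + p)) (alpha : 'cV[int]_n) : int :=
  divz (((usubmx beta)^T *m diag_mx (\row_i delta i) *m alpha) 0 0) (delta k).

(* Main.v *)
Require Import Defs.
From HB Require Import structures.
From mathcomp Require Import all_boot all_order all_algebra.
From mathcomp Require Import zify ring lra.
Set Implicit Arguments. Unset Strict Implicit. Unset Printing Implicit Defensive.
Import Order.TTheory GRing.Theory Num.Theory.
Local Open Scope ring_scope.

Section SF.
Variables (m : nat) (F : unitRingType) (v : F) (Lam : 'M[int]_m) (X : 'cV[int]_m -> F).
Hypothesis H : skew_field_of_fractions v Lam X.

Lemma sf_field (x : F) : x != 0 -> x \is a GRing.unit.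
Proof. by move: H => [fi *]; apply: fi. Qed.
Lemma sf_vunit : v \is a GRing.unit.
Proof. by move: H => [_ []]. Qed.
Lemma sf_comm (x : F) : GRing.comm v x.
Proof. by move: H => [_ [_ c] _]; rewrite /GRing.comm c. Qed.
Lemma sf_vzC z (x : F) : v ^ z * x = x * v ^ z.
Proof. have := commrXz z (GRing.commr_sym (sf_comm x)). by rewrite /GRing.comm. Qed.
Lemma sf_mul a b : X a * X b = v ^ ((a^T *m Lam *m b) 0 0) * X (a + b).
Proof. by move: H => [_ _ mu *]; apply: mu. Qed.
Lemma sf_vz_unit z : v ^ z \is a GRing.unit.
Proof. exact: unitrXz sf_vunit. Qed.

Lemma sf_X0 : X 0 = 1.
Proof.
have nz : X 0 != 0.
  apply/eqP => X00.
  move: H => [_ _ _ LI _].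
  have := LI 1%N (fun _ => 0) (fun _ => 0) (fun _ => 1).
  have inj : injective (fun i : 'I_1 => ((fun _ => 0 : int) i, (fun _ => 0 : 'cV[int]_m) i)).
    by move=> i j _; rewrite !ord1.
  move=> /(_ inj); rewrite big_ord1 X00 mulr0 => /(_ erefl ord0) //.
have u := sf_field nz.
apply: (mulIr u). rewrite mul1r sf_mul.
by rewrite mulmx0 mxE expr0z mul1r addr0.
Qed.

Lemma sf_Xinv a : X a * X (- a) = v ^ ((a^T *m Lam *m (- a)) 0 0).
Proof. by rewrite sf_mul subrr sf_X0 mulr1. Qed.

Lemma sf_Xunit a : X a \is a GRing.unit.
Proof.
apply: sf_field; apply/eqP => Xa0.
have := sf_vz_unit ((a^T *m Lam *m (- a)) 0 0).
by rewrite -sf_Xinv Xa0 mul0r unitr0.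
Qed.

Lemma sf_Xneg a : X (- a) = (X a)^-1 * v ^ ((a^T *m Lam *m (- a)) 0 0).
Proof. by rewrite -sf_Xinv mulKr // sf_Xunit. Qed.

Lemma sf_Xadd a b : X (a + b) = (v ^ ((a^T *m Lam *m b) 0 0))^-1 * (X a * X b).
Proof. by rewrite sf_mul mulKr // sf_vz_unit. Qed.

Lemma sf_morph (G : unitRingType) (f g : {rmorphism F -> G}) :
  f v = g v -> (forall i, f (X (evec i)) = g (X (evec i))) -> forall x, f x = g x.
Proof.
move=> fv fe.
have fvz z : f (v ^ z) = g (v ^ z).
  by rewrite !rmorphXz ?fv // sf_vunit.
have fadd a b : f (X a) = g (X a) -> f (X b) = g (X b) -> f (X (a + b)) = g (X (a + b)).
  move=> ha hb; rewrite sf_Xadd !rmorphM !rmorphV ?sf_vz_unit // fvz ha hb //.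
have fneg a : f (X a) = g (X a) -> f (X (- a)) = g (X (- a)).
  move=> ha; rewrite sf_Xneg !rmorphM !rmorphV ?sf_Xunit // fvz ha //.
have f0 : f (X 0) = g (X 0) by rewrite sf_X0 !rmorph1.
have fnat i (N : nat) : f (X (N%:Z *: evec i)) = g (X (N%:Z *: evec i)).
  elim: N => [|N IH]; first by rewrite scale0r.
  by rewrite intS scalerDl scale1r addrC; apply: fadd.
have fint i (z : int) : f (X (z *: evec i)) = g (X (z *: evec i)).
  case: z => N; first exact: fnat.
  by rewrite NegzE scaleNr; apply: fneg; apply: fnat.
have fX a : f (X a) = g (X a).
  rewrite [a]matrix_sum_delta.
  apply: (big_ind (fun a => f (X a) = g (X a))) => //.
  move=> i _; rewrite big_ord1 -/(evec i).
  exact: fint.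
move=> x; move: H => [_ _ _ _ gen]; apply: (gen (fun x => f x = g x)) => //.
- by rewrite !rmorph1.
- by move=> a b ha hb; rewrite !rmorphB ha hb.
- by move=> a b ha hb; rewrite !rmorphM ha hb.
- move=> a ha; case: (boolP (a \is a GRing.unit)) => ua.
    by rewrite !rmorphV // ha.
  by rewrite invr_out.
Qed.
End SF.
Section BL.
Variables (n p : nat) (delta : 'I_n -> int) (B : 'M[int]_(n + p, n)) (Lam : 'M[int]_(n + p)) (k : 'I_n).
Hypothesis HLam : Lam^T = - Lam.
Hypothesis HB : B^T *m Lam = row_mx (diag_mx (\row_i delta i)) 0.
Hypothesis Hd : 0 < delta k.

Lemma LamB : Lam *m col k B = - delta k *: evec (lshift p k).
Proof.
apply/matrixP => i j; rewrite ord1 !mxE.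
have e := congr1 (fun M : 'M_(n, n + p) => M k i) HB.
move: e; rewrite !mxE /= => e.
have -> : \sum_j Lam i j * col k B j 0 = - \sum_j B^T k j * Lam j i.
  rewrite -sumrN; apply: eq_bigr => l _.
  have := congr1 (fun M : 'M_(n + p) => M l i) HLam; rewrite !mxE => ->.
  by rewrite ?mxE mulNr mulrC.
rewrite e; case: (splitP i) => l ij.
  have -> : i = lshift p l by apply/val_inj.
  rewrite !mxE andbT.
  have -> : (lshift p l == lshift p k) = (l == k).
    by apply/eqP/eqP => [/lshift_inj|->].
  case: (eqVneq l k) => [_|nk] /=; first by rewrite mulr1n mulr1.
  by rewrite mulr0n oppr0 mulr0.
have -> : i = rshift n l by apply/val_inj.
rewrite !mxE oppr0 andbT.
have -> : (rshift n l == lshift p k) = false.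
  apply/negbTE; rewrite -(inj_eq val_inj) /=; move: (ltn_ord k); lia.
by rewrite mulr0.
Qed.

Lemma quadB (x : 'cV[int]_(n + p)) :
  (x^T *m Lam *m col k B) 0 0 = - delta k * x (lshift p k) 0.
Proof. by rewrite -mulmxA LamB -scalemxAr -colE !mxE. Qed.

Lemma quad_skew (x : 'cV[int]_(n + p)) : (x^T *m Lam *m x) 0 0 = 0.
Proof.
have e : (x^T *m Lam *m x) 0 0 = ((x^T *m Lam *m x)^T) 0 0 by rewrite [RHS]mxE.
move: e; rewrite !trmx_mul trmxK HLam mulNmx mulmxN mulmxA [in RHS]mxE => e.
apply/eqP; move/eqP: e; rewrite -subr_eq0 opprK -mulr2n mulrn_eq0 /=; exact: id.
Qed.

Lemma Bkk : B (lshift p k) k = 0.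
Proof.
have := quadB (col k B); rewrite quad_skew mxE => /esym /eqP.
by rewrite mulf_eq0 oppr_eq0 (gt_eqF Hd) => /eqP.
Qed.

Lemma quadBc (x : 'cV[int]_(n + p)) c :
  (x^T *m Lam *m (c *: col k B)) 0 0 = - c * delta k * x (lshift p k) 0.
Proof. by rewrite -scalemxAr mxE quadB; ring. Qed.
End BL.

Lemma posp_vec (n p : nat) (B : 'M[int]_(n + p, n)) (k : 'I_n) (r : 'I_n -> nat) (s : nat) (eps : int) :
  (eps == 1) || (eps == -1) -> B (lshift p k) k = 0 ->
  Emx B r k eps *m evec (lshift p k) + (s%:Z * eps) *: col k B =
  s%:Z *: posv (eps *: col k B) + ((r k)%:Z - s%:Z) *: posv (- eps *: col k B)
     - evec (lshift p k).
Proof.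
move=> He Bkk; apply/matrixP => i j; rewrite ord1 -colE !mxE.
case: (eqVneq i (lshift p k)) => [->|ne].
  rewrite eqxx Bkk /posp /=; lia.
rewrite eqxx /posp /=.
move: He => /orP [/eqP ->|/eqP ->]; nia. Qed.

Lemma Emx_col (n p : nat) (B : 'M[int]_(n + p, n)) r (k : 'I_n) eps i :
  i != lshift p k -> Emx B r k eps *m evec i = evec i.
Proof.
move=> ne; apply/matrixP => a b; rewrite ord1 -colE !mxE (negbTE ne) /=.
by rewrite andbT eq_sym.
Qed.

Lemma psi_exp_ek (n p : nat) (delta : 'I_n -> int) (k : 'I_n) (x : 'cV[int]_(n + p)) eps :
  delta k != 0 -> psi_exp delta k x (eps *: evec k) = eps * x (lshift p k) 0.
Proof.
move=> dk; rewrite /psi_exp -scalemxAr -colE mul_mx_diag !mxE.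
by rewrite mulrA mulzK.
Qed.

Lemma BmulE (n p : nat) (B : 'M[int]_(n + p, n)) (k : 'I_n) c :
  B *m (c *: evec k) = c *: col k B.
Proof. by rewrite -scalemxAr -colE. Qed.

Section TM.
Variables (n p : nat) (delta : 'I_n -> int) (B : 'M[int]_(n + p, n)) (Lam : 'M[int]_(n + p)) (k : 'I_n).
Hypothesis HLam : Lam^T = - Lam.
Hypothesis HB : B^T *m Lam = row_mx (diag_mx (\row_i delta i)) 0.
Hypothesis Hd : 0 < delta k.
Variables (F : unitRingType) (v : F) (X : 'cV[int]_(n + p) -> F).
Hypothesis H : skew_field_of_fractions v Lam X.

Lemma Xpow c (s : nat) : X (c *: col k B) ^+ s = X ((s%:Z * c) *: col k B).
Proof.
elim: s => [|s IH]; first by rewrite mul0r scale0r (sf_X0 H).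
rewrite exprSr IH (sf_mul H) (quadBc HLam HB Hd) !mxE (Bkk HLam HB Hd) !mulr0 expr0z mul1r.
by rewrite -scalerDl intS mulrDl mul1r addrC.
Qed.

Lemma term (x : 'cV[int]_(n + p)) (c : int) (s : nat) : x (lshift p k) 0 = -1 ->
  X x * (v ^ (- c * delta k) * X (c *: col k B)) ^+ s = X (x + (s%:Z * c) *: col k B).
Proof.
move=> xk.
rewrite exprMn_comm; last exact: (sf_vzC H).
rewrite Xpow exprnP exprz_exp mulrA -(sf_vzC H) -mulrA (sf_mul H) (quadBc HLam HB Hd) xk mulrA.
rewrite -exprzDr ?(sf_vunit H) //.
have -> : - c * delta k * s%:Z + - (s%:Z * c) * delta k * -1 = 0 by ring.
by rewrite expr0z mul1r.
Qed.

Lemma leval_comm (l : laurent) (x : F) : leval v l * x = x * leval v l.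
Proof.
rewrite /leval mulr_suml mulr_sumr; apply: eq_bigr => i _.
rewrite -mulrA (sf_vzC H) !mulrA; congr (_ * _).
by rewrite commr_int.
Qed.

Lemma leval_morph (f : {rmorphism F -> F}) (l : laurent) : f v = v -> f (leval v l) = leval v l.
Proof.
move=> fv; rewrite /leval rmorph_sum; apply: eq_bigr => i _.
by rewrite rmorphM rmorph_int rmorphXz ?(sf_vunit H) // fv.
Qed.
End TM.

Theorem mainTheorem9
  (n p : nat) (r : 'I_n -> nat) (h : 'I_n -> nat -> laurent)
  (delta : 'I_n -> int)
  (B : 'M[int]_(n + p, n)) (Lam Lam' : 'M[int]_(n + p))
  (F F' : unitRingType) (v : F) (v' : F')
  (X : 'cV[int]_(n + p) -> F) (X' : 'cV[int]_(n + p) -> F')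
  (k : 'I_n) (eps : int)
  (mu phi : {rmorphism F' -> F}) (psi psii : {rmorphism F -> F}) :
  (* mutation data (R, h) *)
  (forall i, (0 < r i)%N) ->
  (forall i s, (s <= r i)%N -> leqv (h i s) (h i (r i - s)%N)) ->
  (forall i, leqv (h i 0%N) lone /\ leqv (h i (r i)) lone) ->
  (* compatible pair (B_t, Lam_t), D = diag(delta) = diag(d_1^-1, ..., d_n^-1) *)
  (forall i, 0 < delta i) ->
  Lam^T = - Lam ->
  B^T *m Lam = row_mx (diag_mx (\row_i delta i)) 0 ->
  (* Lam_t' is the mutation of Lam_t in direction k *)
  Lam' = (Emx B r k 1)^T *m Lam *m Emx B r k 1 ->
  (* F_t and F_t' *)
  skew_field_of_fractions v Lam X ->
  skew_field_of_fractions v' Lam' X' ->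
  (eps == 1) || (eps == -1) ->
  (* mu_{k;t} *)
  mu v' = v ->
  (forall i, i != lshift p k -> mu (X' (evec i)) = X (evec i)) ->
  mu (X' (evec (lshift p k))) =
    \sum_(s < (r k).+1)
      leval v (h k s) *
      X (s%:Z *: posv (eps *: col k B) + ((r k)%:Z - s%:Z) *: posv (- eps *: col k B)
         - evec (lshift p k)) ->
  (* phi_{k;t;eps} *)
  phi v' = v ->
  (forall a, phi (X' a) = X (Emx B r k eps *m a)) ->
  (* psi = psi_{k;t}(Yhat_{k;t}^eps), psii its inverse *)
  psi v = v ->
  (forall beta, psi (X beta) =
     X beta * (hpow v (fun s => leval v (h k s)) (r k) (delta k)
                    (X (B *m (eps *: evec k)))
                    (psi_exp delta k beta (eps *: evec k)))^-1) ->
  (forall x, psi (psii x) = x /\ psii (psi x) = x) ->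
  forall x : F', mu x = (if eps == 1 then psi (phi x) else psii (phi x)).
Proof.
move=> Hr Hsym Hh Hd HLam HB HLam' HF HF' Heps muv mue muek phiv phiX psiv psiX psiinv.
have Hdk := Hd k.
have dk0 : delta k != 0 by rewrite gt_eqF.
have Bkk0 := Bkk HLam HB Hdk.
set hs := fun s => leval v (h k s).
have vu := sf_vunit HF.
have psi_ei i : i != lshift p k -> psi (X (evec i)) = X (evec i).
  move=> ne; rewrite psiX psi_exp_ek // mxE eq_sym (negbTE ne) /= mulr0.
  by rewrite /hpow /= big_ord0 invr1 mulr1.
have psii_ei i : i != lshift p k -> psii (X (evec i)) = X (evec i).
  by move=> ne; rewrite -{1}(psi_ei i ne) (psiinv _).2.
have hfacE c Y : hfac v hs (r k) c Y = \sum_(s < (r k).+1) hs s * (v ^ c * Y) ^+ s by [].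
have ekk : (Emx B r k eps *m evec (lshift p k)) (lshift p k) 0 = -1.
  by rewrite -colE !mxE eqxx.
move: Heps => /orP [/eqP E|/eqP E]; subst eps.
- rewrite eqxx => x; apply: (sf_morph HF' (f := mu) (g := (psi \o phi)%FUN)) => //=.
    by rewrite phiv psiv.
  move=> i; case: (eqVneq i (lshift p k)) => [->|ne]; last first.
    by rewrite mue // phiX Emx_col // psi_ei.
  rewrite muek phiX psiX psi_exp_ek // ekk /hpow /= big_ord1 invrK BmulE.
  rewrite /hfac mulr_sumr; apply: eq_bigr => s _.
  rewrite mulrA -(leval_comm HF) -mulrA.
  have -> : delta k * (2 * (-1 + (@nat_of_ord 1 ord0)%:Z) + 1) = - 1 * delta k.
    by rewrite /=; ring.
  rewrite (term HLam HB Hdk HF) //.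
  rewrite (posp_vec r s (eps := 1) erefl Bkk0). 
  by [].
have -> : ((-1 : int) == 1) = false by [].
move=> x; apply: (sf_morph HF' (f := mu) (g := (psii \o phi)%FUN)) => //=.
  by rewrite phiv muv -[in RHS]psiv (psiinv _).2.
move=> i; case: (eqVneq i (lshift p k)) => [->|ne]; last first.
  by rewrite mue // phiX Emx_col // psii_ei.
set P := hpow v hs (r k) (delta k) (X (B *m (-1 *: evec k))) 1.
have Pu : P \is a GRing.unit.
  apply: (sf_field HF); apply/eqP => P0.
  have e1 := psiX (- evec (lshift p k)).
  rewrite psi_exp_ek // !mxE eqxx /= -/P P0 invr0 mulr0 in e1.
  have := sf_Xinv HF (- evec (lshift p k)).
  move/(congr1 psi); rewrite rmorphM e1 mul0r rmorphXz // psiv => /esym e0.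
  by move: (unitrXz (((- evec (lshift p k))^T *m Lam *m (- - evec (lshift p k))) 0 0) vu); rewrite e0 unitr0.
set beta := Emx B r k (-1) *m evec (lshift p k).
suff E : psi (mu (X' (evec (lshift p k)))) = X beta.
  by rewrite phiX -/beta -E (psiinv _).2.
have gam s : s%:Z *: posv (-1 *: col k B) + ((r k)%:Z - s%:Z) *: posv (- -1 *: col k B)
      - evec (lshift p k) = beta + (s%:Z * -1) *: col k B.
  by rewrite (posp_vec r s (eps := -1) erefl Bkk0).
have XbP : X beta * P = \sum_(s < (r k).+1) hs s * X (beta + (s%:Z * -1) *: col k B).
  rewrite /P /hpow /= big_ord1 /hfac mulr_sumr; apply: eq_bigr => s _.
  rewrite mulrA -(leval_comm HF) -mulrA BmulE.
  have -> : delta k * (2 * (@nat_of_ord 1 ord0)%:Z + 1) = - (-1) * delta k.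
    by rewrite /=; ring.
  by rewrite (term HLam HB Hdk HF).
rewrite muek rmorph_sum.
have -> : \sum_(s < (r k).+1) psi (leval v (h k s) * X (s%:Z *: posv (-1 *: col k B) + ((r k)%:Z - s%:Z) *: posv (- -1 *: col k B) - evec (lshift p k)))
   = (\sum_(s < (r k).+1) hs s * X (beta + (s%:Z * -1) *: col k B)) * P^-1.
  rewrite mulr_suml; apply: eq_bigr => s _.
  have ent : (beta + (s%:Z * -1) *: col k B) (lshift p k) 0 = -1.
    by rewrite mxE ekk !mxE Bkk0 mulr0 addr0.
  rewrite gam rmorphM (leval_morph HF) // psiX psi_exp_ek // ent -/P.
  by rewrite mulrA.
by rewrite -XbP mulrK.
Qed.
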